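(* For $x,y\ge 1$ and $n>x+y$, the maximum possible number of edges in a task-dependency graph produced by the $(x,y)$ edge-removal process on $n$ vertices is $2n-x-y-2$.
   Context: A task-dependency graph is a finite directed acyclic graph (no loops, no multiple edges). A vertex is initial if it has in-degree $0$ and terminal if it has out-degree $0$ (an isolated vertex is both). The $(x,y)$ edge-removal process on $n$ vertices: start with the task-dependency graph on $\{1,\dots,n\}$ having all edges $(a,b)$ with $a<b$. Edges are removed uniformly at random, one at a time; a removal that would cause more than $x$ initial vertices or more than $y$ terminal vertices is cancelled. The process terminates when no further edge can be removed; the produced graph is the final graph (over all possible runs). *)

(* Defs.v *)
From mathcomp Require Import all_boot.
Set Implicit Arguments. Unset Strict Implicit. Unset Printing Implicit Defensive.

(* Vertices are 'I_n (standing for 1..n); a graph is its edge set, a set of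
   ordered pairs (a,b) meaning the edge a -> b. *)
Definition graph (n : nat) := {set 'I_n * 'I_n}.

Definition complete_dag (n : nat) : graph n := [set e : 'I_n * 'I_n | (e.1 < e.2)%N].

Definition is_initial n (E : graph n) (v : 'I_n) : bool := [forall u, (u, v) \notin E].
Definition is_terminal n (E : graph n) (v : 'I_n) : bool := [forall w, (v, w) \notin E].

Definition num_initial n (E : graph n) : nat := #|[set v | is_initial E v]|.
Definition num_terminal n (E : graph n) : nat := #|[set v | is_terminal E v]|.

Definition admissible (x y : nat) n (E : graph n) : bool :=
  (num_initial E <= x) && (num_terminal E <= y).

(* one non-cancelled removal step of the (x,y) edge-removal process *)
Definition removal_step (x y : nat) n (E E' : graph n) : Prop :=
  exists e, e \in E /\ E' = E :\ e /\ admissible x y E'.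

Inductive reachable (x y n : nat) : graph n -> Prop :=
| reach_start : reachable x y (complete_dag n)
| reach_step : forall E E', reachable x y E -> removal_step x y E E' -> reachable x y E'.

Definition final_graph (x y n : nat) (E : graph n) : Prop :=
  reachable x y E /\ ~ (exists E', removal_step x y E E').

(* Main.v *)
Require Import Defs.
From mathcomp Require Import all_boot zify.
Set Implicit Arguments. Unset Strict Implicit. Unset Printing Implicit Defensive.


Definition initS n (E : graph n) := [set v | is_initial E v].
Definition termS n (E : graph n) := [set v | is_terminal E v].

Lemma initial_mono n (E F : graph n) : F \subset E -> initS E \subset initS F.
Proof.
move=> sFE; apply/subsetP => v; rewrite !inE /is_initial => /forallP H.
apply/forallP => u; apply: contra (H u); exact: (subsetP sFE).
Qed.

Lemma terminal_mono n (E F : graph n) : F \subset E -> termS E \subset termS F.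
Proof.
move=> sFE; apply/subsetP => v; rewrite !inE /is_terminal => /forallP H.
apply/forallP => u; apply: contra (H u); exact: (subsetP sFE).
Qed.

Lemma adm_mono x y n (E F : graph n) : F \subset E -> admissible x y F -> admissible x y E.
Proof.
move=> sFE /andP[h1 h2]; apply/andP; split.
  apply: leq_trans h1; exact: subset_leq_card (initial_mono sFE).
apply: leq_trans h2; exact: subset_leq_card (terminal_mono sFE).
Qed.

Lemma card_le1_of n (S : {set 'I_n}) : (forall a b, a \in S -> b \in S -> a = b) -> #|S| <= 1.
Proof.
move=> H; case: (set_0Vmem S) => [->|[a aS]]; first by rewrite cards0.
have : S \subset [set a] by apply/subsetP => b bS; rewrite inE; apply/eqP; exact: H.
by move/subset_leq_card; rewrite cards1.
Qed.

Lemma dag_adm x y n : 1 <= x -> 1 <= y -> admissible x y (complete_dag n).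
Proof.
move=> hx hy; apply/andP; split.
  apply: leq_trans hx; apply: card_le1_of => a b.
  have K : forall v : 'I_n, v \in [set v | is_initial (complete_dag n) v] -> val v = 0.
    move=> v; rewrite inE /is_initial => /forallP H.
    have h0 : 0 < n by have := ltn_ord v; lia.
    have := H (Ordinal h0); rewrite inE /=; lia.
  by move=> /K ha /K hb; apply: val_inj; rewrite /= ha hb.
apply: leq_trans hy; apply: card_le1_of => a b.
have K : forall v : 'I_n, v \in [set v | is_terminal (complete_dag n) v] -> val v = n.-1.
  move=> v; rewrite inE /is_terminal => /forallP H.
  have h0 : n.-1 < n by have := ltn_ord v; lia.
  have := H (Ordinal h0); rewrite inE /=; have := ltn_ord v; lia.
by move=> /K ha /K hb; apply: val_inj; rewrite /= ha hb.
Qed.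

Lemma reach_props x y n (E : graph n) : 1 <= x -> 1 <= y -> reachable x y E ->
  E \subset complete_dag n /\ admissible x y E.
Proof.
move=> hx hy; elim=> [|G G' _ [sG aG] [e [eG [-> a']]]]; first by split => //; exact: dag_adm.
split => //; apply: subset_trans sG; exact: subsetDl.
Qed.

Lemma reach_all x y n (F : graph n) : admissible x y F -> F \subset complete_dag n ->
  forall G : graph n, F \subset G -> G \subset complete_dag n -> reachable x y G.
Proof.
move=> aF sF; move=> G; move: {2}#|complete_dag n :\: G| (erefl #|complete_dag n :\: G|) => k.
elim: k G => [|k IH] G hk sFG sGD.
  have : complete_dag n :\: G == set0 by rewrite -cards_eq0 hk.
  rewrite setD_eq0 => sDG; have -> : G = complete_dag n by apply/eqP; rewrite eqEsubset sGD sDG.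
  exact: reach_start.
have [e he] : {e | e \in complete_dag n :\: G}.
  case: (set_0Vmem (complete_dag n :\: G)) => [h|]; last by [].
  by move: hk; rewrite h cards0.
move: he; rewrite inE => /andP[eG eD].
apply: (@reach_step _ _ _ (e |: G)).
  apply: IH.
  - have := cardsD1 e (complete_dag n :\: G); rewrite inE eG eD /= hk.
    have -> : (complete_dag n :\: G) :\ e = complete_dag n :\: (e |: G).
      by apply/setP => f; rewrite !inE; case: (f == e); rewrite ?andbF ?andbT.
    lia.
  - apply: subset_trans sFG _; exact: subsetUr.
  - by rewrite subUset sub1set eD sGD.
exists e; split; first by rewrite setU11.
split; first by rewrite setU1K.
exact: adm_mono aF.
Qed.

Lemma init_remove n (E : graph n) (a b : 'I_n) x :
  (a, b) \in E -> num_initial E <= x -> x < num_initial (E :\ (a, b)) ->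
  (forall u, (u, b) \in E -> u = a) /\ num_initial E = x.
Proof.
move=> eE h1 h2.
have sub : initS (E :\ (a,b)) \subset b |: initS E.
  apply/subsetP => v; rewrite !inE /is_initial => /forallP H.
  case: eqP => //= nvb; apply/forallP => u; have := H u; rewrite !inE.
  by rewrite xpair_eqE (introF eqP nvb) andbF.
have hb : b \in initS (E :\ (a,b)).
  apply: contraTT h2 => nb; rewrite -leqNgt.
  have : initS (E :\ (a,b)) \subset initS E.
    apply/subsetP => v vI; have := subsetP sub v vI; rewrite in_setU1.
    by case/orP => // /eqP ev; rewrite ev in vI; rewrite vI in nb.
  by move/subset_leq_card => h; apply: leq_trans h h1.
split.
  move=> u uE; move: hb; rewrite inE /is_initial => /forallP/(_ u).
  rewrite !inE uE andbT negbK xpair_eqE => /andP[/eqP] //.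
have := subset_leq_card sub; rewrite cardsU1.
rewrite /num_initial in h1 h2 *; move: h1 h2; rewrite -/(initS E) -/(initS (E :\ (a,b))).
case: (b \notin initS E) => /=; lia.
Qed.

Lemma term_remove n (E : graph n) (a b : 'I_n) y :
  (a, b) \in E -> num_terminal E <= y -> y < num_terminal (E :\ (a, b)) ->
  (forall w, (a, w) \in E -> w = b) /\ num_terminal E = y.
Proof.
move=> eE h1 h2.
have sub : termS (E :\ (a,b)) \subset a |: termS E.
  apply/subsetP => v; rewrite !inE /is_terminal => /forallP H.
  case: eqP => //= nva; apply/forallP => u; have := H u; rewrite !inE.
  by rewrite xpair_eqE (introF eqP nva).
have ha : a \in termS (E :\ (a,b)).
  apply: contraTT h2 => nb; rewrite -leqNgt.
  have : termS (E :\ (a,b)) \subset termS E.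
    apply/subsetP => v vI; have := subsetP sub v vI; rewrite in_setU1.
    by case/orP => // /eqP ev; rewrite ev in vI; rewrite vI in nb.
  by move/subset_leq_card => h; apply: leq_trans h h1.
split.
  move=> u uE; move: ha; rewrite inE /is_terminal => /forallP/(_ u).
  rewrite !inE uE andbT negbK xpair_eqE => /andP[_ /eqP] //.
have := subset_leq_card sub; rewrite cardsU1.
rewrite /num_terminal in h1 h2 *; move: h1 h2; rewrite -/(termS E) -/(termS (E :\ (a,b))).
case: (a \notin termS E) => /=; lia.
Qed.

Lemma upper x y n (E : graph n) : 1 <= x -> 1 <= y -> x + y < n ->
  E \subset complete_dag n -> admissible x y E ->
  (forall e, e \in E -> ~~ admissible x y (E :\ e)) -> #|E| <= 2 * n - x - y - 2.
Proof.
move=> hx hy hn sD /andP[hI hT] hfin.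
have dagE : forall a b, (a, b) \in E -> a < b.
  by move=> a b /(subsetP sD); rewrite inE.
set Ein := [set e in E | x < num_initial (E :\ e)].
set Eout := E :\: Ein.
have P1 : forall a b, (a, b) \in Ein -> (a, b) \in E /\
    (forall u, (u, b) \in E -> u = a) /\ num_initial E = x.
  move=> a b; rewrite inE => /andP[eE h]; split => //; exact: init_remove.
have P2 : forall a b, (a, b) \in Eout -> (a, b) \in E /\
    (forall w, (a, w) \in E -> w = b) /\ num_terminal E = y.
  move=> a b; rewrite !inE => /andP[h eE]; rewrite eE /= -ltnNge in h.
  split => //; apply: term_remove => //.
  have := hfin _ eE; rewrite /admissible negb_and -!ltnNge; move: h; rewrite ltnS leqNgt; case: (x < _) => //.
set X1 := [set e.2 | e in Ein].
set X2 := [set e.1 | e in Eout].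
have cE : #|E| = #|X1| + #|X2|.
  rewrite !card_in_imset.
  - rewrite -(cardsID Ein E); congr (_ + _); apply: eq_card => e.
    by rewrite !inE; case: (e \in E); rewrite ?andbF ?andbT.
  - move=> [a b] [a' b'] /P2 [e1 [h1 _]] /P2 [e2 _] /= eq.
    by rewrite -eq in e2 *; rewrite (h1 _ e2).
  - move=> [a b] [a' b'] /P1 [e1 [h1 _]] /P1 [e2 _] /= eq.
    by rewrite -eq in e2 *; rewrite (h1 _ e2).
set A := ~: initS E.
set B := ~: termS E.
have sX1 : X1 \subset A.
  apply/subsetP => v /imsetP [[a b] /P1 [eE _] ->]; rewrite !inE /is_initial /=.
  by apply/forallP => /(_ a); rewrite eE.
have sX2 : X2 \subset B.
  apply/subsetP => v /imsetP [[a b] /P2 [eE _] ->]; rewrite !inE /is_terminal /=.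
  by apply/forallP => /(_ b); rewrite eE.
have cA : #|A| = n - num_initial E by rewrite /A cardsCs setCK card_ord.
have cB : #|B| = n - num_terminal E by rewrite /B cardsCs setCK card_ord.
have dA : #|X1| = #|A| - #|A :\: X1| by rewrite cardsD (setIidPr sX1); have := subset_leq_card sX1; lia.
have dB : #|X2| = #|B| - #|B :\: X2| by rewrite cardsD (setIidPr sX2); have := subset_leq_card sX2; lia.
have leA := subset_leq_card (subsetDl A X1).
have leB := subset_leq_card (subsetDl B X2).
have deficit : 2 <= #|A :\: X1| + #|B :\: X2|.
  have Isz : #|initS E| + #|termS E| < n by move: hI hT; rewrite /num_initial /num_terminal /initS /termS; lia.
  have [w0 w0A] : exists w0, w0 \in A.
    apply/card_gt0P; rewrite cA; move: Isz; rewrite /num_initial -/(initS E); lia.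
  have [v0 v0B] : exists v0, v0 \in B.
    apply/card_gt0P; rewrite cB; move: Isz; rewrite /num_terminal -/(termS E); lia.
  case: (arg_minnP (fun i : 'I_n => val i) w0A) => w wA0 wmin.
  have wA : w \in A := wA0.
  case: (arg_maxnP (fun i : 'I_n => val i) v0B) => v vB0 vmax.
  have vB : v \in B := vB0.
  have wv : w <= v.
    rewrite leqNgt; apply/negP => vw.
    have : [set: 'I_n] \subset initS E :|: termS E.
      apply/subsetP => i _; rewrite in_setU.
      case: (ltnP i w) => iw.
        apply/orP; left; apply: contraTT iw => iI; rewrite -leqNgt; apply: wmin.
        have h : i \in ~: initS E by rewrite in_setC.
        exact: h.
      apply/orP; right; apply: contraTT (leq_trans vw iw) => iT; rewrite -leqNgt; apply: vmax.
      have h : i \in ~: termS E by rewrite in_setC.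
      exact: h.
    move/subset_leq_card; rewrite cardsT card_ord cardsU => h.
    by have := leq_ltn_trans (leq_trans h (leq_subr _ _)) Isz; rewrite ltnn.
  have D1 : (w \in A :\: X1) \/ exists2 u, u \in B :\: X2 & u < w.
    case: (boolP (w \in X1)) => wX1; last by left; rewrite in_setD wX1 wA.
    right; case/imsetP: wX1 => [[u w'] ein /= eqw]; subst w'.
    have [eE [uq _]] := P1 _ _ ein.
    exists u; last exact: dagE.
    rewrite in_setD; apply/andP; split.
      apply/imsetP => [[[a b] eo /= eu]]; subst a.
      have [_ [uo _]] := P2 _ _ eo.
      have ewb := uo _ eE; subst b.
      by move: eo; rewrite in_setD ein.
    rewrite in_setC inE /is_terminal; apply/negP => /forallP/(_ w); by rewrite eE.
  have D2 : (v \in B :\: X2) \/ exists2 z, z \in A :\: X1 & v < z.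
    case: (boolP (v \in X2)) => vX2; last by left; rewrite in_setD vX2 vB.
    right; case/imsetP: vX2 => [[v' z] eo /= eqv]; subst v'.
    have [eE [zq _]] := P2 _ _ eo.
    exists z; last exact: dagE.
    rewrite in_setD; apply/andP; split.
      apply/imsetP => [[[a b] ei /= ez]]; subst b.
      have [_ [ui _]] := P1 _ _ ei.
      have eav := ui _ eE; subst a.
      by move: eo; rewrite in_setD ei.
    rewrite in_setC inE /is_initial; apply/negP => /forallP/(_ v); by rewrite eE.
  have g1 : forall (s : {set 'I_n}) (a b : 'I_n), a \in s -> b \in s -> a != b -> 2 <= #|s|.
    move=> s a b aS bS nab; have : [set a; b] \subset s by rewrite subUset !sub1set aS bS.
    by move/subset_leq_card; rewrite cards2 nab.
  have g0 : forall (s : {set 'I_n}) (a : 'I_n), a \in s -> 1 <= #|s|.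
    by move=> s a aS; apply/card_gt0P; exists a.
  case: D1 => [h1|[u h1 uw]]; case: D2 => [h2|[z h2 vz]].
  - exact: (leq_add (g0 _ _ h1) (g0 _ _ h2)).
  - have : 2 <= #|A :\: X1| by apply: (g1 _ _ _ h1 h2); apply/eqP => ewz; move: vz wv; rewrite -ewz; lia.
    move=> h; exact: leq_trans h (leq_addr _ _).
  - have : 2 <= #|B :\: X2| by apply: (g1 _ _ _ h1 h2); apply/eqP => euv; move: uw wv; rewrite euv; lia.
    move=> h; exact: leq_trans h (leq_addl _ _).
  - exact: (leq_add (g0 _ _ h2) (g0 _ _ h1)).
have f1 : X1 != set0 -> num_initial E = x.
  case/set0Pn => v /imsetP [[a b] /P1 [_ [_ ->]] _] //.
have f2 : X2 != set0 -> num_terminal E = y.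
  case/set0Pn => v /imsetP [[a b] /P2 [_ [_ ->]] _] //.
case: (eqVneq X1 set0) => e1; case: (eqVneq X2 set0) => e2.
- by rewrite cE e1 e2 cards0.
- have := f2 e2; rewrite cE e1 cards0; have := subset_leq_card sX2; lia.
- have := f1 e1; rewrite cE e2 cards0; have := subset_leq_card sX1; lia.
- have := f1 e1; have := f2 e2; lia.
Qed.

Lemma card_iv n lo hi : hi <= n -> #|[set i : 'I_n | lo <= i < hi]| = hi - lo.
Proof.
elim: hi => [|hi IH] hn.
  have -> : [set i : 'I_n | lo <= i < 0] = set0 by apply/setP => i; rewrite !inE; lia.
  by rewrite cards0.
have hi_n : hi < n by [].
case: (leqP lo hi) => hl.
  have -> : [set i : 'I_n | lo <= i < hi.+1] = Ordinal hi_n |: [set i : 'I_n | lo <= i < hi].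
    apply/setP => i; rewrite !inE -val_eqE /=; lia.
  rewrite cardsU1 IH ?inE /=; [|lia]; rewrite ltnn andbF /=; lia.
have -> : [set i : 'I_n | lo <= i < hi.+1] = [set i : 'I_n | lo <= i < hi].
  apply/setP => i; rewrite !inE; lia.
rewrite IH; lia.
Qed.

Definition Fset x y n : graph n :=
  [set e : 'I_n * 'I_n | ((nat_of_ord e.1 == 0) && (x <= e.2) && (e.2 < n - 1)) ||
                         ((nat_of_ord e.2 == n - 1) && (0 < e.1) && (e.1 < n - y))].

Lemma inF x y n (a b : 'I_n) : ((a, b) \in Fset x y n) =
  ((nat_of_ord a == 0) && (x <= b) && (b < n - 1)) || ((nat_of_ord b == n - 1) && (0 < a) && (a < n - y)).
Proof. by rewrite inE. Qed.

Section Constr.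
Variables (x y n : nat).
Hypotheses (hx : 1 <= x) (hy : 1 <= y) (hn : x + y < n).

Let h0 : 0 < n. Proof. lia. Qed.
Let hl : n - 1 < n. Proof. lia. Qed.
Let h1 : 1 < n. Proof. lia. Qed.
Let hxn : x < n. Proof. lia. Qed.
Definition z0 : 'I_n := Ordinal h0.
Definition l0 : 'I_n := Ordinal hl.

Lemma initF : initS (Fset x y n) = [set v : 'I_n | v < x].
Proof.
apply/setP => v; rewrite !inE /is_initial.
case: (ltnP v x) => hv.
  apply/forallP => u; rewrite inF; have := ltn_ord u; lia.
apply/negP => /forallP H.
case: (ltnP v (n - 1)) => hv2.
  by have := H z0; rewrite inF /=; lia.
by have := H (Ordinal h1); rewrite inF /=; have := ltn_ord v; lia.
Qed.

Lemma termF : termS (Fset x y n) = [set v : 'I_n | n - y <= v].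
Proof.
apply/setP => v; rewrite !inE /is_terminal.
case: (leqP (n - y) v) => hv.
  apply/forallP => u; rewrite inF; have := ltn_ord u; lia.
apply/negP => /forallP H.
case: (posnP v) => hv2.
  by have := H (Ordinal hxn); rewrite inF /=; lia.
by have := H l0; rewrite inF /=; lia.
Qed.

Lemma card_lt (k : nat) : k <= n -> #|[set v : 'I_n | v < k]| = k.
Proof.
move=> hk; rewrite -[in RHS](subn0 k) -(card_iv 0 hk); apply: eq_card => v; rewrite !inE.
by [].
Qed.

Lemma card_ge (k : nat) : k <= n -> #|[set v : 'I_n | n - k <= v]| = k.
Proof.
move=> hk; transitivity #|[set i : 'I_n | n - k <= i < n]|.
  by apply: eq_card => v; rewrite !inE ltn_ord andbT.
rewrite card_iv //; lia.
Qed.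

Lemma F_adm : admissible x y (Fset x y n).
Proof.
rewrite /admissible /num_initial /num_terminal -/(initS _) -/(termS _) initF termF.
rewrite card_lt ?card_ge //; lia.
Qed.

Lemma F_dag : Fset x y n \subset complete_dag n.
Proof.
apply/subsetP => [[a b]]; rewrite inF inE /=; have := ltn_ord b; lia.
Qed.

Lemma F_card : #|Fset x y n| = 2 * n - x - y - 2.
Proof.
have -> : Fset x y n = [set (z0, b) | b in [set b : 'I_n | x <= b < n - 1]] :|:
                        [set (a, l0) | a in [set a : 'I_n | 0 < a < n - y]].
  apply/setP => [[a b]]; rewrite inF; apply/idP/idP.
    case/orP => /andP[/andP [ha hb1] hb2]; apply/setUP.
      left; apply/imsetP; exists b; first by rewrite inE hb1 hb2.
      by congr pair; apply: val_inj; rewrite /= (eqP ha).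
    right; apply/imsetP; exists a; first by rewrite inE hb1 hb2.
    by congr pair; apply: val_inj; rewrite /= (eqP ha).
  case/setUP => /imsetP [c]; rewrite inE => hc [-> ->] /=; lia.
rewrite cardsU !card_imset; last by move=> c d [].
  2: by move=> c d [].
have -> : #|[set (z0, b) | b in [set b : 'I_n | x <= b < n - 1]] :&:
            [set (a, l0) | a in [set a : 'I_n | 0 < a < n - y]]| = 0.
  apply/eqP; rewrite cards_eq0 -subset0; apply/subsetP => e.
  case/setIP => /imsetP [b hb ->] /imsetP [a ha [_ eb]].
  by move: hb; rewrite inE eb /=; lia.
rewrite (card_iv _ (leq_subr 1 n)) (card_iv _ (leq_subr y n)); lia.
Qed.
Lemma F_block e : e \in Fset x y n -> ~~ admissible x y (Fset x y n :\ e).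
Proof.
case: e => a b eF; have := eF; rewrite inF => /orP [/andP[/andP[ha hb1] hb2] | /andP[/andP[ha hb1] hb2]];
  rewrite /admissible negb_and; apply/orP.
  left; rewrite -ltnNge.
  have sub : b |: [set v : 'I_n | v < x] \subset initS (Fset x y n :\ (a,b)).
    rewrite subUset sub1set; apply/andP; split.
      rewrite inE /is_initial; apply/forallP => u; rewrite in_setD1 inF xpair_eqE eqxx andbT.
      case: eqP => [//|nua] /=.
      apply/negP => /orP [/andP[/andP[/eqP hu _] _]|/andP[/andP[/eqP hb _] _]].
        by apply: nua; apply: val_inj; rewrite /= hu (eqP ha).
      lia.
    rewrite -initF; apply: initial_mono; exact: subsetDl.
  have := subset_leq_card sub; rewrite cardsU1 card_lt; last lia.
  by rewrite inE -leqNgt hb1 /= add1n.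
right; rewrite -ltnNge.
have sub : a |: [set v : 'I_n | n - y <= v] \subset termS (Fset x y n :\ (a,b)).
  rewrite subUset sub1set; apply/andP; split.
    rewrite inE /is_terminal; apply/forallP => u; rewrite in_setD1 inF xpair_eqE eqxx /=.
    case: eqP => [//|nub] /=.
    apply/negP => /orP [/andP[/andP[/eqP hu _] _]|/andP[/andP[/eqP hb _] _]].
      lia.
    by apply: nub; apply: val_inj; rewrite /= hb (eqP ha).
  rewrite -termF; apply: terminal_mono; exact: subsetDl.
have := subset_leq_card sub; rewrite cardsU1 card_ge; last lia.
by rewrite inE -ltnNge hb2 /= add1n.
Qed.
End Constr.

Theorem mainTheorem7 (x y n : nat) :
  (1 <= x)%N -> (1 <= y)%N -> (x + y < n)%N ->
  (exists E : graph n, final_graph x y E /\ #|E| = (2 * n - x - y - 2)%N) /\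
  (forall E : graph n, final_graph x y E -> (#|E| <= 2 * n - x - y - 2)%N).
Proof.
move=> hx hy hn; split.
  exists (Fset x y n); split; last exact: F_card.
  split.
    exact: (reach_all (F_adm hx hy hn) (F_dag hx hy hn) (subxx _) (F_dag hx hy hn)).
  move=> [E' [e [eF [-> adm]]]]; move: (F_block hx hy hn eF); by rewrite adm.
move=> E [rE nE]; have [sD aE] := reach_props hx hy rE.
apply: upper => // e eE; apply/negP => adm; apply: nE; exists (E :\ e); exists e; split => //.
Qed.
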